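(* Let $\alpha,\beta\in(0,1)$ with $\alpha+\beta>1$. There is a constant $C$ (depending only on $\alpha,\beta$) such that for all sufficiently large $k$: with the medium-expectation rounding defined in the context, if $X_i$ ($i\in\mathcal{M}_1^*(k)$) are independent indicators with $\mathbb{E}[X_i]=p_i$ and $Y_i$ ($i\in\mathcal{M}_1^*(k)$) are independent indicators with $\mathbb{E}[Y_i]=q_i$, then $$\left\|\sum_{i\in\mathcal{M}_1^*(k)}X_i-\sum_{i\in\mathcal{M}_1^*(k)}Y_i\right\|\le C\left(k^{-\frac{\alpha+\beta-1}{2}}+k^{-\alpha}+k^{-1/2}+k^{-(1-\beta)}\right).$$
   Context: $\|\cdot\|$ is total variation distance. Let $k$ be a positive integer, $\alpha\in(0,1)$, and $p_1,\dots,p_n\in[0,1]$. For $j=0,1,\dots,\lfloor k/2\rfloor$ let $I_j=[j/k,(j+1)/k)$ if $j<\lfloor k/2\rfloor$ and $I_{\lfloor k/2\rfloor}=[\lfloor k/2\rfloor/k,1/2]$; let $I^*_j=\{i:p_i\in I_j\}=\{j_1,\dots,j_{n_j}\}$ (listed in some fixed order, $n_j=|I^*_j|$), $p^j_i:=p_{j_i}$ and $\delta^j_i:=p^j_i-j/k$. Let $\mathcal{M}_1^*(k)=\bigcup_{j=\lfloor k^\alpha\rfloor}^{\lfloor k/2\rfloor}I^*_j$. Medium-expectation rounding: for $j=\lfloor k^\alpha\rfloor,\dots,\lfloor k/2\rfloor$ let $S_j=\sum_{i=1}^{n_j}\delta^j_i$, $m_j=\lfloor kS_j\rfloor$, and set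 $q_{j_i}=(j+1)/k$ for $i=1,\dots,m_j$ and $q_{j_i}=j/k$ for $i=m_j+1,\dots,n_j$. *)

(* Defs.v *)
From Stdlib Require Import Reals Lra Lia Arith List.
Import ListNotations.
Open Scope R_scope.

Definition Rleb (x y : R) : bool := if Rle_dec x y then true else false.
Definition Rltb (x y : R) : bool := if Rlt_dec x y then true else false.

(* floor of a real as a nat (used only for nonnegative arguments) *)
Definition nfloor (x : R) : nat := Z.to_nat (Int_part x).

Definition inI (k j : nat) (x : R) : bool :=
  if Nat.ltb j (Nat.div k 2) then
    Rleb (INR j / INR k) x && Rltb x (INR (S j) / INR k)
  else if Nat.eqb j (Nat.div k 2) then
    Rleb (INR j / INR k) x && Rleb x (1/2)
  else false.

Definition Istar (k : nat) (p : nat -> R) (n j : nat) : list nat :=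
  filter (fun i => inI k j (p i)) (seq 0 n).

Definition Sj (k : nat) (p : nat -> R) (n j : nat) : R :=
  fold_right Rplus 0 (map (fun i => p i - INR j / INR k) (Istar k p n j)).

Definition mj (k : nat) (p : nat -> R) (n j : nat) : nat :=
  nfloor (INR k * Sj k p n j).

Fixpoint pos (i : nat) (l : list nat) : nat :=
  match l with
  | [] => 0%nat
  | x :: l' => if Nat.eqb x i then 0%nat else S (pos i l')
  end.

(* rounded value q_i for i in I*_j: the first m_j elements of I*_j
   (positions 1..m_j in the paper, 0..m_j-1 here) go to (j+1)/k, the rest to j/k *)
Definition qround (k : nat) (p : nat -> R) (n j i : nat) : R :=
  if Nat.ltb (pos i (Istar k p n j)) (mj k p n j)
  then INR (S j) / INR k else INR j / INR k.

Definition jrange (k : nat) (alpha : R) : list nat :=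
  let a := nfloor (Rpower (INR k) alpha) in
  seq a (S (Nat.div k 2) - a).

(* M_1^*(k) = union of the I*_j, j in jrange (disjoint union, as a list) *)
Definition M1star (k : nat) (alpha : R) (p : nat -> R) (n : nat) : list nat :=
  flat_map (fun j => Istar k p n j) (jrange k alpha).

Definition Xprobs (k : nat) (alpha : R) (p : nat -> R) (n : nat) : list R :=
  flat_map (fun j => map p (Istar k p n j)) (jrange k alpha).
Definition Yprobs (k : nat) (alpha : R) (p : nat -> R) (n : nat) : list R :=
  flat_map (fun j => map (qround k p n j) (Istar k p n j)) (jrange k alpha).

(* pmf of a sum of independent indicators with the given means (Poisson binomial) *)
Fixpoint pb (l : list R) (m : nat) : R :=
  match l with
  | [] => if Nat.eqb m 0 then 1 else 0
  | q :: l' => q * (match m with O => 0 | S m' => pb l' m' end) + (1 - q) * pb l' m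
  end.

(* total variation distance between the laws of the two sums
   (both supported on {0,...,max(len)}): (1/2) sum_m |P(m) - Q(m)| *)
Definition tv_sum (l1 l2 : list R) : R :=
  / 2 * sum_f_R0 (fun m => Rabs (pb l1 m - pb l2 m)) (Nat.max (length l1) (length l2)).

(* Main.v *)
Require Import Defs.
From Stdlib Require Import Reals Lra Lia Psatz Arith List Permutation ZArith.
Import ListNotations.
Open Scope R_scope.


Fixpoint sumR (f : nat -> R) (n : nat) : R :=
  match n with O => 0 | S n' => sumR f n' + f n' end.

Lemma sumR_ext f g n : (forall w, (w < n)%nat -> f w = g w) -> sumR f n = sumR g n.
Proof. induction n; simpl; intros H; auto. rewrite IHn by (intros; apply H; lia). rewrite H by lia. auto. Qed.

Lemma sumR_le f g n : (forall w, (w < n)%nat -> f w <= g w) -> sumR f n <= sumR g n.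
Proof. induction n; simpl; intros H; [lra|]. assert (f n <= g n) by (apply H; lia).
 assert (sumR f n <= sumR g n) by (apply IHn; intros; apply H; lia). lra. Qed.

Lemma sumR_nonneg f n : (forall w, (w < n)%nat -> 0 <= f w) -> 0 <= sumR f n.
Proof. intros H. replace 0 with (sumR (fun _ => 0) n). apply sumR_le; auto.
 induction n; simpl; auto. rewrite IHn; [lra|]. intros; apply H; lia. Qed.

Lemma sumR_plus f g n : sumR (fun w => f w + g w) n = sumR f n + sumR g n.
Proof. induction n; simpl; lra. Qed.

Lemma sumR_scal a f n : sumR (fun w => a * f w) n = a * sumR f n.
Proof. induction n; simpl; [ring|]. rewrite IHn; ring. Qed.

Lemma sumR_shift f n : sumR f (S n) = f O + sumR (fun w => f (S w)) n.
Proof. induction n; simpl in *; [ring|]. rewrite IHn. ring. Qed.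

Lemma sumR_mono f n m : (n <= m)%nat -> (forall w, 0 <= f w) -> sumR f n <= sumR f m.
Proof. intros Hle Hf; induction Hle; [lra|]. simpl. specialize (Hf m). lra. Qed.

Lemma sumR_zero_tail f n m : (n <= m)%nat -> (forall w, (n <= w)%nat -> f w = 0) -> sumR f m = sumR f n.
Proof. intros Hle Hf; induction Hle; auto. simpl. rewrite Hf by lia. rewrite IHHle; ring. Qed.

Lemma sumR_abs f n : Rabs (sumR f n) <= sumR (fun w => Rabs (f w)) n.
Proof. induction n; simpl. rewrite Rabs_R0; lra. eapply Rle_trans. apply Rabs_triang. lra. Qed.

Definition prev (f : nat -> R) (w : nat) : R := match w with O => 0 | S w' => f w' end.

Lemma pb_cons q l m : pb (q :: l) m = q * prev (pb l) m + (1 - q) * pb l m.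
Proof. destruct m; simpl; ring. Qed.

Lemma pb_zero l m : (length l < m)%nat -> pb l m = 0.
Proof. revert m; induction l; intros m H; simpl in *.
 - destruct (Nat.eqb_spec m 0); [lia|auto].
 - destruct m; [lia|]. rewrite !IHl by lia. ring. Qed.

Lemma pb_nonneg l m : (forall x, In x l -> 0 <= x <= 1) -> 0 <= pb l m.
Proof. revert m; induction l; intros m H; simpl.
 - destruct (Nat.eqb m 0); lra.
 - assert (Ha : 0 <= a <= 1) by (apply H; simpl; auto).
   assert (IH : forall m, 0 <= pb l m) by (intros; apply IHl; intros; apply H; simpl; auto).
   destruct m. specialize (IH 0%nat). nra. pose proof (IH m). pose proof (IH (S m)). nra. Qed.

Lemma pb_swap a b l m : pb (a :: b :: l) m = pb (b :: a :: l) m.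
Proof. destruct m as [|[|m]]; simpl; ring. Qed.

Lemma pb_perm l1 l2 : Permutation l1 l2 -> forall m, pb l1 m = pb l2 m.
Proof. induction 1; intros m; auto.
 - rewrite !pb_cons. destruct m; simpl; rewrite ?IHPermutation; auto.
 - apply pb_swap.
 - rewrite IHPermutation1; auto. Qed.

Definition Ex (l : list R) (f : nat -> R) : R := sumR (fun s => pb l s * f s) (S (length l)).

Lemma Ex_nil f : Ex [] f = f O.
Proof. unfold Ex; simpl; ring. Qed.

Lemma Ex_cons r l f : Ex (r :: l) f = r * Ex l (fun s => f (S s)) + (1 - r) * Ex l f.
Proof. unfold Ex. simpl length.
 rewrite (sumR_ext _ (fun s => r * (prev (pb l) s * f s) + (1 - r) * (pb l s * f s))).
 2:{ intros; rewrite pb_cons; ring. }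
 rewrite sumR_plus, !sumR_scal. f_equal. f_equal.
 rewrite sumR_shift. simpl prev. rewrite Rmult_0_l, Rplus_0_l. auto.
 f_equal. simpl. rewrite (pb_zero l (S (length l))) by lia. ring. Qed.

Lemma Ex_ext l f g : (forall s, f s = g s) -> Ex l f = Ex l g.
Proof. intros; unfold Ex; apply sumR_ext; intros; rewrite H; auto. Qed.

Lemma Ex_le l f g : (forall x, In x l -> 0 <= x <= 1) -> (forall s, f s <= g s) -> Ex l f <= Ex l g.
Proof. intros; unfold Ex; apply sumR_le; intros. apply Rmult_le_compat_l; auto. apply pb_nonneg; auto. Qed.

Lemma Ex_lin l a b f g : Ex l (fun s => a * f s + b * g s) = a * Ex l f + b * Ex l g.
Proof. unfold Ex. rewrite <- !sumR_scal, <- sumR_plus. apply sumR_ext; intros; ring. Qed.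

Lemma Ex_const l a : Ex l (fun _ => a) = a.
Proof. induction l. rewrite Ex_nil; auto. rewrite Ex_cons, IHl. ring. Qed.

Definition sumL (l : list R) : R := fold_right Rplus 0 l.

Lemma Ex_var l t : Ex l (fun s => (INR s - t)^2) = (sumL l - t)^2 + sumL (map (fun q => q * (1 - q)) l).
Proof. revert t; induction l; intros t. rewrite Ex_nil; simpl; ring.
 rewrite Ex_cons. rewrite (Ex_ext _ _ (fun s => (INR s - (t - 1))^2)).
 2:{ intros; rewrite S_INR; ring. }
 rewrite !IHl. simpl. ring. Qed.

Lemma Ex_sq l f : (forall x, In x l -> 0 <= x <= 1) -> (Ex l f)^2 <= Ex l (fun s => (f s)^2).
Proof. revert f; induction l; intros f H. rewrite !Ex_nil; lra.
 rewrite !Ex_cons. assert (Ha : 0 <= a <= 1) by (apply H; simpl; auto).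
 assert (H' : forall x, In x l -> 0 <= x <= 1) by (intros; apply H; simpl; auto).
 pose proof (IHl (fun s => f (S s)) H'). pose proof (IHl f H'). simpl in *.
 set (x := Ex l (fun s => f (S s))) in *. set (y := Ex l f) in *.
 assert (0 <= a * (1-a) * (x - y)^2) by (apply Rmult_le_pos; [nra| apply pow2_ge_0]). nra. Qed.

Definition bh (m : nat) := pb (repeat (/2) m).

Lemma bh_S m w : bh (S m) w = /2 * prev (bh m) w + /2 * bh m w.
Proof. unfold bh at 1. simpl repeat. rewrite pb_cons. fold (bh m). lra. Qed.

Lemma bh_ratio m w : INR w * bh m w = (INR m + 1 - INR w) * prev (bh m) w.
Proof. revert w; induction m; intros w.
 - unfold bh; simpl. destruct w as [|[|w]]; simpl; try ring.
 - destruct w as [|w]. simpl; ring.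
   rewrite !bh_S. simpl prev. rewrite bh_S.
   pose proof (IHm (S w)) as H1. pose proof (IHm w) as H2. simpl prev in H1.
   rewrite !S_INR in *. nra. Qed.

Lemma bh_diff m w : bh m w - prev (bh m) w = 2 * bh (S m) w * (INR m + 1 - 2 * INR w) / (INR m + 1).
Proof. rewrite bh_S. pose proof (bh_ratio m w).
 assert (INR m + 1 > 0) by (pose proof (pos_INR m); lra).
 apply (Rmult_eq_reg_r (INR m + 1)); [|lra].
 unfold Rdiv. rewrite Rmult_assoc, Rinv_l, Rmult_1_r by lra.
 set (b := bh m w) in *. set (pr := prev (bh m) w) in *. set (x := INR w) in *. set (y := INR m) in *.
 replace ((b - pr) * (y + 1)) with (b*y + b - pr*y - pr) by ring.
 replace (2 * (/ 2 * pr + / 2 * b) * (y + 1 - 2 * x)) with (pr*y + pr - 2*(x*pr) + b*y + b - 2*(x*b)) by field.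
 assert (x * b = y*pr + pr - x*pr) by (rewrite H; ring). lra. Qed.

Definition phi (m : nat) := sumR (fun w => Rabs (bh m w - prev (bh m) w)) (m + 2).

Lemma repeat_in_half m x : In x (repeat (/2) m) -> 0 <= x <= 1.
Proof. intros H; apply repeat_spec in H; subst; lra. Qed.

Lemma phi_sq m : (phi m)^2 <= 4 / (INR m + 1).
Proof.
 assert (Hm : INR m + 1 > 0) by (pose proof (pos_INR m); lra).
 assert (E : phi m = Ex (repeat (/2) (S m)) (fun w => 2 * Rabs (INR m + 1 - 2 * INR w) / (INR m + 1))).
 { unfold phi, Ex. rewrite repeat_length. replace (m+2)%nat with (S (S m)) by lia.
   apply sumR_ext; intros w _. rewrite bh_diff. fold (bh (S m)).
   unfold Rdiv. rewrite !Rabs_mult. rewrite (Rabs_right 2) by lra.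
   rewrite (Rabs_right (/ (INR m + 1))) by (apply Rle_ge, Rlt_le, Rinv_0_lt_compat; lra).
   rewrite (Rabs_right (bh (S m) w)). ring. apply Rle_ge, pb_nonneg, repeat_in_half. }
 rewrite E. eapply Rle_trans. apply Ex_sq. apply repeat_in_half.
 rewrite (Ex_ext _ _ (fun s => (16 / (INR m + 1)^2) * (INR s - (INR m + 1)/2)^2 + 0 * 0)).
 2:{ intros s. set (X := INR m + 1 - 2 * INR s).
   replace ((2 * Rabs X / (INR m + 1))^2) with (4 * (Rabs X)^2 / (INR m + 1)^2) by (field; lra).
   rewrite pow2_abs. unfold X. field. lra. }
 rewrite Ex_lin, Ex_var, Ex_const.
 assert (Hs : forall k x, sumL (repeat x k) = INR k * x).
 { induction k; intros; simpl. ring. rewrite IHk. destruct k; simpl; ring. }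
 assert (Hv : forall k x, sumL (map (fun q => q * (1-q)) (repeat x k)) = INR k * (x * (1-x))).
 { induction k; intros; simpl. ring. rewrite IHk. destruct k; simpl; ring. }
 rewrite Hs, Hv, S_INR. apply Req_le. field. lra. Qed.

Definition Tn n l1 l2 := sumR (fun w => Rabs (pb l1 w - pb l2 w)) n.
Definition Dn n l := sumR (fun w => Rabs (pb l w - prev (pb l) w)) n.

Lemma Tn_perm n l1 l2 l1' l2' : Permutation l1 l1' -> Permutation l2 l2' -> Tn n l1 l2 = Tn n l1' l2'.
Proof. intros H1 H2; unfold Tn; apply sumR_ext; intros. rewrite (pb_perm _ _ H1), (pb_perm _ _ H2). auto. Qed.

Lemma Tn_tri n a b c : Tn n a c <= Tn n a b + Tn n b c.
Proof. unfold Tn. rewrite <- sumR_plus. apply sumR_le; intros.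
 replace (pb a w - pb c w) with ((pb a w - pb b w) + (pb b w - pb c w)) by ring. apply Rabs_triang. Qed.

Lemma Tn_sym n a b : Tn n a b = Tn n b a.
Proof. unfold Tn; apply sumR_ext; intros; apply Rabs_minus_sym. Qed.

Lemma pb_one A w : pb (1 :: A) w = prev (pb A) w.
Proof. rewrite pb_cons. ring. Qed.

Lemma pb_zero_cons A w : pb (0 :: A) w = pb A w.
Proof. rewrite pb_cons. ring. Qed.

Lemma Tn_shift1 n A : Tn n A (1 :: A) = Dn n A.
Proof. unfold Tn, Dn; apply sumR_ext; intros. rewrite pb_one. auto. Qed.

Lemma Dn_cons1 n A : Dn n (1 :: A) <= Dn n A.
Proof. unfold Dn. destruct n. simpl; lra.
 rewrite sumR_shift.
 rewrite (sumR_ext (fun w => Rabs (pb (1::A) (S w) - prev (pb (1::A)) (S w))) (fun w => Rabs (pb A w - prev (pb A) w))).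
 2:{ intros. change (prev (pb (1::A)) (S w)) with (pb (1::A) w).
   rewrite (pb_one A (S w)), (pb_one A w). reflexivity. }
 simpl prev. rewrite pb_one. simpl prev. rewrite Rminus_0_r, Rabs_R0, Rplus_0_l.
 apply sumR_mono; [lia| intros; apply Rabs_pos]. Qed.

Lemma Dn_rep1 n j L : Dn n (repeat 1 j ++ L) <= Dn n L.
Proof. induction j; simpl. lra. eapply Rle_trans. apply Dn_cons1. auto. Qed.

Lemma Dn_bh n m : Dn n (repeat (/2) m) <= phi m.
Proof. unfold phi. fold (bh m). unfold Dn. fold (bh m).
 destruct (le_lt_dec n (m+2)).
 - apply sumR_mono; auto. intros; apply Rabs_pos.
 - rewrite (sumR_zero_tail _ (m+2) n); [lra|lia|].
   intros w Hw. unfold bh. rewrite pb_zero. destruct w. lia. simpl prev. rewrite pb_zero.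
   rewrite Rminus_0_r, Rabs_R0; auto. all: rewrite repeat_length; lia. Qed.

Lemma Tn_rep1 n L u d : Tn n (repeat 1 u ++ L) (repeat 1 (u + d) ++ L) <= INR d * Dn n L.
Proof. induction d. rewrite Nat.add_0_r. unfold Tn. simpl.
 rewrite (sumR_ext _ (fun _ => 0)). 2:{ intros. rewrite Rminus_diag, Rabs_R0. auto. }
 replace (sumR (fun _ => 0) n) with 0. lra. clear; induction n; simpl; lra.
 eapply Rle_trans. apply (Tn_tri _ _ (repeat 1 (u + d) ++ L)).
 rewrite Nat.add_succ_r. simpl repeat. rewrite <- app_comm_cons. rewrite Tn_shift1. rewrite S_INR.
 pose proof (Dn_rep1 n (u+d) L). lra. Qed.

Lemma Tn_base n L u v : Tn n (repeat 1 u ++ L) (repeat 1 v ++ L) <= Rabs (INR u - INR v) * Dn n L.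
Proof. destruct (le_lt_dec u v).
 - pose proof (Tn_rep1 n L u (v - u)). replace (u + (v - u))%nat with v in H by lia.
   rewrite minus_INR in H by lia. rewrite Rabs_minus_sym, Rabs_right; auto.
   apply le_INR in l. lra.
 - pose proof (Tn_rep1 n L v (u - v)). replace (v + (u - v))%nat with u in H by lia.
   rewrite minus_INR in H by lia. rewrite Tn_sym, Rabs_right; auto.
   apply lt_INR in l. lra. Qed.

Lemma comb4 n a1 a2 a3 a4 (X Y f1 f2 f3 f4 g1 g2 g3 g4 : nat -> R) :
  0 <= a1 -> 0 <= a2 -> 0 <= a3 -> 0 <= a4 ->
  (forall w, X w = a1 * f1 w + a2 * f2 w + a3 * f3 w + a4 * f4 w) ->
  (forall w, Y w = a1 * g1 w + a2 * g2 w + a3 * g3 w + a4 * g4 w) ->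
  sumR (fun w => Rabs (X w - Y w)) n <=
  a1 * sumR (fun w => Rabs (f1 w - g1 w)) n + a2 * sumR (fun w => Rabs (f2 w - g2 w)) n
  + a3 * sumR (fun w => Rabs (f3 w - g3 w)) n + a4 * sumR (fun w => Rabs (f4 w - g4 w)) n.
Proof. intros H1 H2 H3 H4 HX HY. rewrite <- !sumR_scal, <- !sumR_plus. apply sumR_le; intros w _.
 rewrite HX, HY.
 replace (a1 * f1 w + a2 * f2 w + a3 * f3 w + a4 * f4 w - (a1 * g1 w + a2 * g2 w + a3 * g3 w + a4 * g4 w))
  with (a1 * (f1 w - g1 w) + a2 * (f2 w - g2 w) + a3 * (f3 w - g3 w) + a4 * (f4 w - g4 w)) by ring.
 eapply Rle_trans. apply Rabs_triang. apply Rplus_le_compat.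
 eapply Rle_trans. apply Rabs_triang. apply Rplus_le_compat.
 eapply Rle_trans. apply Rabs_triang. apply Rplus_le_compat.
 all: rewrite Rabs_mult, Rabs_right by lra; lra. Qed.

Lemma pb_dec p c L w : pb (p :: L) w = 2 * c * pb (/2 :: L) w + (1 - p - c) * pb L w + (p - c) * pb (1 :: L) w.
Proof. rewrite !pb_cons. field. Qed.

Fixpoint F (c : R) (m u v : nat) (P : list (R * R)) : R :=
  match P with
  | [] => phi m * Rabs (INR u - INR v)
  | (p, q) :: P' => 2 * c * F c (S m) u v P' + (1 - Rmax p q - c) * F c m u v P'
      + (Rmin p q - c) * F c m (S u) (S v) P'
      + Rabs (q - p) * (if Rle_dec p q then F c m u (S v) P' else F c m (S u) v P')
  end.

Lemma T_le_F c P : 0 <= c ->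
  (forall pq, In pq P -> c <= Rmin (fst pq) (snd pq) /\ Rmax (fst pq) (snd pq) <= 1 - c) ->
  forall m u v n, Tn n (repeat (/2) m ++ repeat 1 u ++ map fst P) (repeat (/2) m ++ repeat 1 v ++ map snd P)
   <= F c m u v P.
Proof. intros Hc. induction P as [|[p q] P IH]; intros HP m u v n; simpl map.
 - rewrite !app_nil_r. rewrite (Tn_perm n _ _ (repeat 1 u ++ repeat (/2) m) (repeat 1 v ++ repeat (/2) m))
     by apply Permutation_app_comm.
   eapply Rle_trans. apply Tn_base. simpl F. rewrite Rmult_comm. apply Rmult_le_compat_r.
   apply Rabs_pos. apply Dn_bh.
 - assert (HP' : forall pq, In pq P -> c <= Rmin (fst pq) (snd pq) /\ Rmax (fst pq) (snd pq) <= 1 - c)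
     by (intros; apply HP; simpl; auto).
   destruct (HP (p, q)) as [Hmin Hmax]; [simpl; auto|]. simpl fst in *; simpl snd in *.
   specialize (IH HP').
   set (Lx := repeat (/2) m ++ repeat 1 u ++ map fst P).
   set (Ly := repeat (/2) m ++ repeat 1 v ++ map snd P).
   assert (Pm : forall a (A B : list R), Permutation (repeat (/2) m ++ A ++ a :: B) (a :: repeat (/2) m ++ A ++ B)).
   { intros. rewrite app_assoc. symmetry. rewrite app_assoc. apply Permutation_middle. }
   rewrite (Tn_perm n _ _ (p :: Lx) (q :: Ly)) by apply Pm.
   assert (I1 : Tn n (/2 :: Lx) (/2 :: Ly) <= F c (S m) u v P) by apply (IH (S m)).
   assert (I2 : Tn n Lx Ly <= F c m u v P) by apply IH.
   assert (Q1 : forall k B, Permutation (1 :: repeat (/2) m ++ repeat 1 k ++ B) (repeat (/2) m ++ repeat 1 (S k) ++ B)).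
   { intros. simpl repeat. apply Permutation_middle. }
   assert (I3 : Tn n (1 :: Lx) (1 :: Ly) <= F c m (S u) (S v) P).
   { unfold Lx, Ly; rewrite (Tn_perm n _ _ _ _ (Q1 u _) (Q1 v _)). apply IH. }
   assert (I4 : Tn n Lx (1 :: Ly) <= F c m u (S v) P).
   { unfold Lx, Ly; rewrite (Tn_perm n _ _ _ _ (Permutation_refl _) (Q1 v _)). apply IH. }
   assert (I5 : Tn n (1 :: Lx) Ly <= F c m (S u) v P).
   { unfold Lx, Ly; rewrite (Tn_perm n _ _ _ _ (Q1 u _) (Permutation_refl _)). apply IH. }
   simpl F. destruct (Rle_dec p q) as [Hpq|Hpq].
   + rewrite Rmax_right, Rmin_left, Rabs_right in * by lra.
     eapply Rle_trans. unfold Tn. apply (comb4 n (2*c) (1 - q - c) (p - c) (q - p) _ _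
        (pb (/2::Lx)) (pb Lx) (pb (1::Lx)) (pb Lx) (pb (/2::Ly)) (pb Ly) (pb (1::Ly)) (pb (1::Ly))); try lra.
     intros w; rewrite pb_dec with (c := c); ring.
     intros w; rewrite pb_dec with (c := c); ring.
     fold (Tn n (/2::Lx) (/2::Ly)) (Tn n Lx Ly) (Tn n (1::Lx) (1::Ly)) (Tn n Lx (1::Ly)).
     repeat apply Rplus_le_compat; apply Rmult_le_compat_l; auto; lra.
   + rewrite Rmax_left, Rmin_right, Rabs_left in * by lra.
     eapply Rle_trans. unfold Tn. apply (comb4 n (2*c) (1 - p - c) (q - c) (p - q) _ _
        (pb (/2::Lx)) (pb Lx) (pb (1::Lx)) (pb (1::Lx)) (pb (/2::Ly)) (pb Ly) (pb (1::Ly)) (pb Ly)); try lra.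
     intros w; rewrite pb_dec with (c := c); ring.
     intros w; rewrite pb_dec with (c := c); ring.
     fold (Tn n (/2::Lx) (/2::Ly)) (Tn n Lx Ly) (Tn n (1::Lx) (1::Ly)) (Tn n (1::Lx) Ly).
     replace (- (q - p)) with (p - q) by ring.
     repeat apply Rplus_le_compat; apply Rmult_le_compat_l; auto; lra.
Qed.

Lemma le_sqrt x y : 0 <= x -> x * x <= y -> x <= sqrt y.
Proof. intros. rewrite <- (sqrt_square x) by lra. apply sqrt_le_1_alt. auto. Qed.

Lemma cs_add x y A B A' B' : 0 <= A -> 0 <= B -> 0 <= A' -> 0 <= B' ->
  x <= sqrt A * sqrt B -> y <= sqrt A' * sqrt B' -> x + y <= sqrt (A + A') * sqrt (B + B').
Proof. intros. eapply Rle_trans. apply Rplus_le_compat; eauto.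
 pose proof (sqrt_pos A). pose proof (sqrt_pos B). pose proof (sqrt_pos A'). pose proof (sqrt_pos B').
 rewrite <- (sqrt_mult (A + A') (B + B')) by lra. apply le_sqrt. nra.
 pose proof (sqrt_sqrt A H). pose proof (sqrt_sqrt B H0). pose proof (sqrt_sqrt A' H1). pose proof (sqrt_sqrt B' H2).
 set (a := sqrt A) in *. set (b := sqrt B) in *. set (a' := sqrt A') in *. set (b' := sqrt B') in *.
 rewrite <- H9, <- H10, <- H11, <- H12.
 assert (0 <= (a * b' - a' * b)^2) by apply pow2_ge_0. nra. Qed.

Lemma cs_scal s x A B : 0 <= s -> 0 <= A -> 0 <= B -> x <= sqrt A * sqrt B -> s * x <= sqrt (s * A) * sqrt (s * B).
Proof. intros. rewrite !sqrt_mult by lra.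
 replace (sqrt s * sqrt A * (sqrt s * sqrt B)) with ((sqrt s * sqrt s) * (sqrt A * sqrt B)) by ring.
 rewrite sqrt_sqrt by lra. apply Rmult_le_compat_l; auto. Qed.

Lemma cs4 a1 a2 a3 a4 x1 x2 x3 x4 A1 A2 A3 A4 B1 B2 B3 B4 :
  0 <= a1 -> 0 <= a2 -> 0 <= a3 -> 0 <= a4 ->
  0 <= A1 -> 0 <= A2 -> 0 <= A3 -> 0 <= A4 -> 0 <= B1 -> 0 <= B2 -> 0 <= B3 -> 0 <= B4 ->
  x1 <= sqrt A1 * sqrt B1 -> x2 <= sqrt A2 * sqrt B2 -> x3 <= sqrt A3 * sqrt B3 -> x4 <= sqrt A4 * sqrt B4 ->
  a1 * x1 + a2 * x2 + a3 * x3 + a4 * x4 <=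
  sqrt (a1 * A1 + a2 * A2 + a3 * A3 + a4 * A4) * sqrt (a1 * B1 + a2 * B2 + a3 * B3 + a4 * B4).
Proof. intros.
 assert (forall a A, 0 <= a -> 0 <= A -> 0 <= a * A) by (intros; apply Rmult_le_pos; auto).
 apply cs_add; try apply cs_scal; auto;
 try (repeat apply Rplus_le_le_0_compat; auto).
 apply cs_add; try apply cs_scal; auto;
 try (repeat apply Rplus_le_le_0_compat; auto).
 apply cs_add; try apply cs_scal; auto. Qed.

Definition G1 (c : R) (m : nat) (P : list (R * R)) : R :=
  Ex (map (fun _ => 2 * c) P) (fun s => (phi (m + s))^2).

Lemma G1_cons c m pq P : G1 c m (pq :: P) = 2 * c * G1 c (S m) P + (1 - 2 * c) * G1 c m P.
Proof. unfold G1. simpl map. rewrite Ex_cons. f_equal. f_equal. apply Ex_ext. intros. rewrite Nat.add_succ_r. auto. Qed.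

Lemma G1_nonneg c m P : 0 <= 2 * c <= 1 -> 0 <= G1 c m P.
Proof. intros. unfold G1. rewrite <- (Ex_const (map (fun _ => 2 * c) P) 0). apply Ex_le.
 intros x Hx. apply in_map_iff in Hx. destruct Hx as [? [? ?]]; subst; lra.
 intros; apply pow2_ge_0. Qed.

Fixpoint G2 (d : R) (P : list (R * R)) : R :=
  match P with
  | [] => d^2
  | (p, q) :: P' => (1 - Rabs (q - p)) * G2 d P'
      + Rabs (q - p) * (if Rle_dec p q then G2 (d - 1) P' else G2 (d + 1) P')
  end.

Definition goodP (c : R) (P : list (R * R)) :=
  forall pq, In pq P -> c <= Rmin (fst pq) (snd pq) /\ Rmax (fst pq) (snd pq) <= 1 - c.

Lemma G2_nonneg c d P : 0 <= c -> goodP c P -> 0 <= G2 d P.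
Proof. intros Hc; revert d; induction P as [|[p q] P IH]; intros d HP; simpl. apply pow2_ge_0.
 assert (HP' : goodP c P) by (intros x Hx; apply HP; simpl; auto).
 destruct (HP (p,q)) as [H1 H2]; [simpl; auto|]. simpl in H1, H2.
 assert (Rabs (q - p) <= 1).
 { unfold Rmin, Rmax in *. destruct (Rle_dec p q); unfold Rabs; destruct Rcase_abs; lra. }
 pose proof (Rabs_pos (q - p)).
 destruct (Rle_dec p q); apply Rplus_le_le_0_compat; apply Rmult_le_pos; try lra; apply IH; auto. Qed.

Lemma phi_nonneg m : 0 <= phi m.
Proof. unfold phi. apply sumR_nonneg. intros; apply Rabs_pos. Qed.

Lemma F_cs c P : 0 <= c -> 2 * c <= 1 -> goodP c P ->
  forall m u v, F c m u v P <= sqrt (G1 c m P) * sqrt (G2 (INR u - INR v) P).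
Proof. intros Hc Hc1. induction P as [|[p q] P IH]; intros HP m u v.
 - simpl. unfold G1. simpl map. rewrite Ex_nil. rewrite Nat.add_0_r.
   rewrite sqrt_pow2 by apply phi_nonneg. rewrite <- sqrt_Rsqr_abs. unfold Rsqr. rewrite Rmult_1_r. lra.
 - assert (HP' : goodP c P) by (intros x Hx; apply HP; simpl; auto).
   destruct (HP (p,q)) as [H1 H2]; [simpl; auto|]. simpl in H1, H2.
   specialize (IH HP').
   assert (G1p : forall m, 0 <= G1 c m P) by (intros; apply G1_nonneg; lra).
   assert (G2p : forall d, 0 <= G2 d P) by (intros; eapply G2_nonneg; eauto).
   rewrite G1_cons. simpl F. simpl G2.
   assert (E1 : INR (S u) - INR (S v) = INR u - INR v) by (rewrite !S_INR; ring).
   destruct (Rle_dec p q) as [Hpq|Hpq].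
   + rewrite Rmax_right, Rmin_left, Rabs_right in * by lra.
     assert (E2 : INR u - INR (S v) = INR u - INR v - 1) by (rewrite !S_INR; ring).
     replace (2 * c * G1 c (S m) P + (1 - 2 * c) * G1 c m P) with
       (2 * c * G1 c (S m) P + (1 - q - c) * G1 c m P + (p - c) * G1 c m P + (q - p) * G1 c m P) by ring.
     replace ((1 - (q - p)) * G2 (INR u - INR v) P + (q - p) * G2 (INR u - INR v - 1) P) with
       (2 * c * G2 (INR u - INR v) P + (1 - q - c) * G2 (INR u - INR v) P + (p - c) * G2 (INR u - INR v) P
        + (q - p) * G2 (INR u - INR v - 1) P) by ring.
     apply cs4; try lra; auto. rewrite <- E1; auto. rewrite <- E2; auto.
   + rewrite Rmax_left, Rmin_right, Rabs_left in * by lra.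
     assert (E2 : INR (S u) - INR v = INR u - INR v + 1) by (rewrite !S_INR; ring).
     replace (2 * c * G1 c (S m) P + (1 - 2 * c) * G1 c m P) with
       (2 * c * G1 c (S m) P + (1 - p - c) * G1 c m P + (q - c) * G1 c m P + (- (q - p)) * G1 c m P) by ring.
     replace ((1 - - (q - p)) * G2 (INR u - INR v) P + - (q - p) * G2 (INR u - INR v + 1) P) with
       (2 * c * G2 (INR u - INR v) P + (1 - p - c) * G2 (INR u - INR v) P + (q - c) * G2 (INR u - INR v) P
        + (- (q - p)) * G2 (INR u - INR v + 1) P) by ring.
     apply cs4; try lra; auto. rewrite <- E1; auto. rewrite <- E2; auto.
Qed.

Definition mu (P : list (R * R)) : R := fold_right (fun pq acc => snd pq - fst pq + acc) 0 P.
Definition nu (P : list (R * R)) : R := fold_right (fun pq acc => Rabs (snd pq - fst pq) + acc) 0 P.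

Lemma G2_bound c P : 0 <= c -> goodP c P -> forall d, G2 d P <= (d - mu P)^2 + nu P.
Proof. intros Hc; induction P as [|[p q] P IH]; intros HP d; simpl. unfold mu, nu; simpl; lra.
 assert (HP' : goodP c P) by (intros x Hx; apply HP; simpl; auto).
 destruct (HP (p,q)) as [H1 H2]; [simpl; auto|]. simpl in H1, H2.
 specialize (IH HP'). fold (mu P) (nu P).
 assert (Rabs (q - p) <= 1).
 { unfold Rmin, Rmax in *. destruct (Rle_dec p q); unfold Rabs; destruct Rcase_abs; lra. }
 destruct (Rle_dec p q) as [Hpq|Hpq].
 - rewrite Rabs_right in * by lra. pose proof (IH d). pose proof (IH (d - 1)).
   set (w := q - p) in *. set (M := mu P) in *. set (V := nu P) in *.
   assert (0 <= w) by (unfold w; lra).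
   apply Rle_trans with ((1 - w) * ((d - M)^2 + V) + w * ((d - 1 - M)^2 + V)).
   apply Rplus_le_compat; apply Rmult_le_compat_l; lra.
   assert (0 <= w * w) by nra. nra.
 - rewrite Rabs_left in * by lra. pose proof (IH d). pose proof (IH (d + 1)).
   set (w := - (q - p)) in *. set (M := mu P) in *. set (V := nu P) in *.
   assert (0 <= w) by (unfold w; lra).
   apply Rle_trans with ((1 - w) * ((d - M)^2 + V) + w * ((d + 1 - M)^2 + V)).
   apply Rplus_le_compat; apply Rmult_le_compat_l; lra.
   replace (q - p) with (- w) by (unfold w; ring).
   assert (0 <= w * w) by nra. nra. Qed.

Lemma inv_bound x t : 0 <= x -> 0 < t -> 1 / (x + 1) <= 2 / (t + 2) + 4 * (x - t)^2 / t^2.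
Proof. intros Hx Ht. assert (0 <= 4 * (x - t)^2 / t^2).
 { unfold Rdiv. apply Rmult_le_pos. apply Rmult_le_pos; [lra| apply pow2_ge_0]. apply Rlt_le, Rinv_0_lt_compat. apply pow_lt; lra. }
 destruct (Rle_dec (t / 2) x).
 - assert (1 / (x + 1) <= 2 / (t + 2)).
   { apply Rmult_le_reg_r with ((x + 1) * (t + 2)). nra.
     unfold Rdiv. replace (1 * / (x + 1) * ((x + 1) * (t + 2))) with (t + 2) by (field; lra).
     replace (2 * / (t + 2) * ((x + 1) * (t + 2))) with (2 * (x + 1)) by (field; lra). lra. }
   lra.
 - assert (1 / (x + 1) <= 1).
   { unfold Rdiv. rewrite Rmult_1_l. rewrite <- Rinv_1. apply Rinv_le_contravar; lra. }
   assert (1 <= 4 * (x - t)^2 / t^2).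
   { apply Rmult_le_reg_r with (t^2). nra. unfold Rdiv. rewrite Rmult_assoc, Rinv_l by nra. nra. }
   assert (0 < 2 / (t + 2)) by (apply Rdiv_lt_0_compat; lra). lra. Qed.

Lemma G1_bound c m P : 0 < c -> 2 * c <= 1 -> (1 <= length P)%nat ->
  G1 c m P <= 24 / (2 * c * INR (length P)).
Proof. intros Hc Hc1 HN. set (l := map (fun _ : R * R => 2 * c) P).
 set (t := 2 * c * INR (length P)).
 assert (Ht : 0 < t). { unfold t. apply Rmult_lt_0_compat. lra. apply lt_0_INR. lia. }
 assert (Hl : forall x, In x l -> 0 <= x <= 1).
 { intros x Hx. apply in_map_iff in Hx. destruct Hx as [? [? ?]]; subst; lra. }
 unfold G1. fold l. eapply Rle_trans. apply (Ex_le l _ (fun s => 4 * (2 / (t + 2)) + 16 / t^2 * (INR s - t)^2)); auto.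
 { intros s. eapply Rle_trans. apply phi_sq. pose proof (inv_bound (INR s) t (pos_INR s) Ht).
   rewrite plus_INR. pose proof (pos_INR m). pose proof (pos_INR s).
   apply Rle_trans with (4 * (1 / (INR s + 1))).
   { unfold Rdiv. rewrite Rmult_1_l. apply Rmult_le_compat_l. lra. apply Rinv_le_contravar; lra. }
   replace (16 / t^2 * (INR s - t)^2) with (4 * (4 * (INR s - t)^2 / t^2)) by (field; lra). lra. }
 rewrite (Ex_ext _ _ (fun s => (4 * (2 / (t + 2))) * 1 + (16 / t^2) * (INR s - t)^2)) by (intros; ring).
 rewrite Ex_lin, Ex_const, Ex_var.
 assert (Hs : sumL l = t).
 { unfold l, t. clear. induction P. simpl; unfold sumL; simpl; ring.
   simpl map. simpl length. unfold sumL in *. simpl fold_right. rewrite IHP, S_INR; ring. }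
 assert (Hv : sumL (map (fun q => q * (1 - q)) l) <= t).
 { unfold l, t. clear - Hc Hc1. induction P. simpl; unfold sumL; simpl; lra.
   simpl map. simpl length. unfold sumL in *. simpl fold_right. rewrite S_INR. nra. }
 rewrite Hs. replace ((t - t)^2) with 0 by ring.
 assert (16 / t^2 * (0 + sumL (map (fun q => q * (1 - q)) l)) <= 16 / t).
 { apply Rle_trans with (16 / t^2 * t). apply Rmult_le_compat_l. unfold Rdiv. apply Rmult_le_pos. lra.
   apply Rlt_le, Rinv_0_lt_compat. nra. lra. right. field. lra. }
 assert (4 * (2 / (t + 2)) <= 8 / t).
 { unfold Rdiv. apply Rmult_le_reg_r with (t * (t + 2)). nra.
   replace (4 * (2 * / (t + 2)) * (t * (t + 2))) with (8 * t) by (field; lra).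
   replace (8 * / t * (t * (t + 2))) with (8 * (t + 2)) by (field; lra). lra. }
 assert (8 / t + 16 / t = 24 / t) by (field; lra). lra. Qed.

Lemma nfloor_spec x : 0 <= x -> INR (nfloor x) <= x < INR (nfloor x) + 1.
Proof. intros Hx. unfold nfloor. destruct (base_Int_part x) as [H1 H2].
 assert (H0 : (0 <= Int_part x)%Z).
 { apply le_IZR. assert (IZR (Int_part x) > -1) by lra. apply lt_IZR in H. simpl in *. apply IZR_le. lia. }
 rewrite INR_IZR_INZ, Z2Nat.id by auto. lra. Qed.

Lemma mu_app P Q : mu (P ++ Q) = mu P + mu Q.
Proof. induction P; simpl. unfold mu; simpl; ring. unfold mu in *; simpl. rewrite IHP; ring. Qed.

Lemma nu_app P Q : nu (P ++ Q) = nu P + nu Q.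
Proof. induction P; simpl. unfold nu; simpl; ring. unfold nu in *; simpl. rewrite IHP; ring. Qed.

Lemma mu_le_nu P : Rabs (mu P) <= nu P.
Proof. induction P; unfold mu, nu in *; simpl. rewrite Rabs_R0; lra.
 eapply Rle_trans. apply Rabs_triang. lra. Qed.

Lemma nu_bound P e : (forall pq, In pq P -> Rabs (snd pq - fst pq) <= e) -> nu P <= INR (length P) * e.
Proof. induction P; intros H; unfold nu in *. simpl; lra.
 simpl length. rewrite S_INR. simpl fold_right. assert (Rabs (snd a - fst a) <= e) by (apply H; simpl; auto).
 assert (fold_right (fun pq acc => Rabs (snd pq - fst pq) + acc) 0 P <= INR (length P) * e)
   by (apply IHP; intros; apply H; simpl; auto). lra. Qed.

Lemma map_flat_map {A B C} (f : B -> C) (g : A -> list B) l :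
  map f (flat_map g l) = flat_map (fun x => map f (g x)) l.
Proof. induction l; simpl; auto. rewrite map_app, IHl. auto. Qed.

Lemma fold_ext_in (f f' : nat -> R) L : (forall i, In i L -> f i = f' i) ->
  fold_right (fun i acc => f i + acc) 0 L = fold_right (fun i acc => f' i + acc) 0 L.
Proof. induction L; intros H; simpl; auto. rewrite H by (simpl; auto). rewrite IHL; auto. intros; apply H; simpl; auto. Qed.

Lemma fold_pos (g : nat -> R) L : NoDup L ->
  fold_right (fun i acc => g (Defs.pos i L) + acc) 0 L = sumR g (length L).
Proof. revert g; induction L as [|x L IH]; intros g HL. simpl; auto.
 inversion HL; subst. simpl length. rewrite sumR_shift. simpl fold_right.
 rewrite Nat.eqb_refl. f_equal.
 rewrite <- IH by auto.
 clear IH HL. apply fold_ext_in. intros i Hi. simpl. destruct (Nat.eqb_spec x i). subst; contradiction. auto. Qed.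

Lemma sum_if n m A B : (m <= n)%nat ->
  sumR (fun t => if Nat.ltb t m then A else B) n = INR m * A + INR (n - m) * B.
Proof. induction n; intros H. assert (m = 0%nat) by lia. subst; simpl; ring.
 destruct (Nat.eq_dec m (S n)).
 - subst. simpl sumR. rewrite (sumR_ext _ (fun _ => A)).
   2:{ intros. destruct (Nat.ltb_spec w (S n)); auto; lia. }
   destruct (Nat.ltb_spec n (S n)); [|lia]. replace (S n - S n)%nat with 0%nat by lia.
   assert (Hc : forall k, sumR (fun _ => A) k = INR k * A) by (induction k; simpl; [ring| rewrite IHk; destruct k; simpl; ring]).
   rewrite Hc. rewrite S_INR. simpl. ring.
 - simpl sumR. rewrite IHn by lia. destruct (Nat.ltb_spec n m); [lia|].
   replace (S n - m)%nat with (S (n - m)) by lia. rewrite S_INR. ring. Qed.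

Definition bucket k p n j := map (fun i => (p i, qround k p n j i)) (Istar k p n j).
Definition PP k alpha p n := flat_map (bucket k p n) (jrange k alpha).

Lemma Xprobs_eq k alpha p n : Xprobs k alpha p n = map fst (PP k alpha p n).
Proof. unfold Xprobs, PP. rewrite map_flat_map. apply flat_map_ext. intros. unfold bucket. rewrite map_map. auto. Qed.

Lemma Yprobs_eq k alpha p n : Yprobs k alpha p n = map snd (PP k alpha p n).
Proof. unfold Yprobs, PP. rewrite map_flat_map. apply flat_map_ext. intros. unfold bucket. rewrite map_map. auto. Qed.

Lemma half_le k : INR (Nat.div k 2) * 2 <= INR k.
Proof. assert (H : (2 * Nat.div k 2 <= k)%nat) by (apply Nat.Div0.mul_div_le).
 apply le_INR in H. rewrite mult_INR in H. replace (INR 2) with 2 in H by (simpl; lra). lra. Qed.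

Lemma half_ge k : INR k <= INR (Nat.div k 2) * 2 + 1.
Proof. pose proof (Nat.div_mod k 2). pose proof (Nat.mod_upper_bound k 2).
 assert (H1 : (k <= 2 * Nat.div k 2 + 1)%nat) by lia.
 apply le_INR in H1. rewrite plus_INR, mult_INR in H1. replace (INR 2) with 2 in H1 by (simpl; lra). replace (INR 1) with 1 in H1 by (simpl; lra). lra. Qed.

Lemma div_le a b c : 0 < c -> a <= b * c -> a / c <= b.
Proof. intros. unfold Rdiv. apply Rmult_le_reg_r with c; auto. rewrite Rmult_assoc, Rinv_l, Rmult_1_r; lra. Qed.

Lemma le_div a b c : 0 < c -> a * c <= b -> a <= b / c.
Proof. intros. unfold Rdiv. apply Rmult_le_reg_r with c; auto. rewrite Rmult_assoc, Rinv_l, Rmult_1_r; lra. Qed.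

Lemma inI_facts k j x : (1 <= k)%nat -> (j <= Nat.div k 2)%nat -> inI k j x = true ->
  INR j / INR k <= x /\ x <= INR (S j) / INR k /\ x <= 1/2.
Proof. intros Hk Hj H. assert (Hk' : 0 < INR k) by (apply lt_0_INR; lia).
 pose proof (half_le k). pose proof (half_ge k).
 unfold inI, Rleb, Rltb in H. destruct (Nat.ltb_spec j (Nat.div k 2)).
 - destruct (Rle_dec (INR j / INR k) x); destruct (Rlt_dec x (INR (S j) / INR k)); simpl in H; try discriminate.
   split; auto. split; [lra|].
   assert (INR (S j) <= INR (Nat.div k 2)) by (apply le_INR; lia).
   assert (INR (S j) / INR k <= 1/2). { apply div_le; auto. lra. }
   lra.
 - destruct (Nat.eqb_spec j (Nat.div k 2)); [|discriminate].
   destruct (Rle_dec (INR j / INR k) x); destruct (Rle_dec x (1/2)); simpl in H; try discriminate.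
   split; auto. split; auto. subst.
   assert (1/2 <= INR (S (Nat.div k 2)) / INR k).
   { apply le_div; auto. rewrite S_INR. lra. }
   lra. Qed.

Lemma fold_map_plus (f : nat -> R) L : fold_right Rplus 0 (map f L) = fold_right (fun i acc => f i + acc) 0 L.
Proof. induction L; simpl; auto. rewrite IHL; auto. Qed.

Lemma fold_sub_const (f : nat -> R) B L :
  fold_right (fun i acc => (f i - B) + acc) 0 L = fold_right (fun i acc => f i + acc) 0 L - INR (length L) * B.
Proof. induction L; simpl fold_right. simpl; ring. simpl length. rewrite S_INR, IHL. ring. Qed.

Lemma fold_bounds (f : nat -> R) e L : (forall i, In i L -> 0 <= f i <= e) ->
  0 <= fold_right (fun i acc => f i + acc) 0 L <= INR (length L) * e.
Proof. induction L; intros H. simpl; lra. simpl length. rewrite S_INR. simpl fold_right.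
 assert (0 <= f a <= e) by (apply H; simpl; auto).
 assert (0 <= fold_right (fun i acc => f i + acc) 0 L <= INR (length L) * e) by (apply IHL; intros; apply H; simpl; auto).
 lra. Qed.

Lemma mu_bucket k p n j : (1 <= k)%nat -> (j <= Nat.div k 2)%nat ->
  - / INR k <= mu (bucket k p n j) <= 0.
Proof. intros Hk Hj. assert (Hk' : 0 < INR k) by (apply lt_0_INR; lia).
 set (L := Istar k p n j).
 assert (HL : forall i, In i L -> INR j / INR k <= p i <= INR (S j) / INR k).
 { intros i Hi. unfold L, Istar in Hi. apply filter_In in Hi. destruct Hi as [_ Hi].
   destruct (inI_facts k j (p i) Hk Hj Hi) as [? [? ?]]. lra. }
 assert (ND : NoDup L) by (apply NoDup_filter, seq_NoDup).
 assert (E1 : mu (bucket k p n j) = fold_right (fun i acc => qround k p n j i + acc) 0 L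
                - fold_right (fun i acc => p i + acc) 0 L).
 { unfold bucket, mu. fold L. clear. induction L; simpl. ring. rewrite IHL. ring. }
 set (m := mj k p n j).
 assert (E2 : fold_right (fun i acc => qround k p n j i + acc) 0 L =
    sumR (fun t => if Nat.ltb t m then INR (S j) / INR k else INR j / INR k) (length L)).
 { rewrite <- (fold_pos (fun t => if Nat.ltb t m then INR (S j) / INR k else INR j / INR k)) by auto.
   apply fold_ext_in. intros i _. unfold qround. fold L. auto. }
 set (Sj' := Sj k p n j).
 assert (E3 : Sj' = fold_right (fun i acc => p i + acc) 0 L - INR (length L) * (INR j / INR k)).
 { unfold Sj', Sj. fold L. rewrite fold_map_plus. apply fold_sub_const. }
 assert (B : 0 <= Sj' <= INR (length L) * / INR k).
 { unfold Sj', Sj. fold L. rewrite fold_map_plus. apply fold_bounds. intros i Hi.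
   specialize (HL i Hi). rewrite S_INR in HL. unfold Rdiv in HL. split; [lra|]. lra. }
 assert (Hm : INR m <= INR k * Sj' < INR m + 1).
 { unfold m, mj. fold Sj'. apply nfloor_spec. apply Rmult_le_pos; lra. }
 assert (Hmn : (m <= length L)%nat).
 { apply INR_le. assert (INR k * Sj' <= INR (length L)).
   { apply Rle_trans with (INR k * (INR (length L) * / INR k)). apply Rmult_le_compat_l; lra.
     right. field. lra. } lra. }
 rewrite E1, E2, sum_if by auto. rewrite minus_INR by auto.
 assert (E4 : fold_right (fun i acc => p i + acc) 0 L = Sj' + INR (length L) * (INR j / INR k)) by lra.
 rewrite E4. rewrite S_INR.
 replace (INR m * ((INR j + 1) / INR k) + (INR (length L) - INR m) * (INR j / INR k) -
   (Sj' + INR (length L) * (INR j / INR k))) with ((INR m - INR k * Sj') / INR k) by (field; lra).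
 split.
 - apply le_div; auto. replace (- / INR k * INR k) with (-1) by (field; lra). lra.
 - apply div_le; auto. lra.
Qed.

Lemma sum_f_R0_sumR f N : sum_f_R0 f N = sumR f (S N).
Proof. induction N as [|N IH]. simpl; ring. simpl sum_f_R0. rewrite IH. simpl. auto. Qed.

Lemma in_jrange k alpha j : In j (jrange k alpha) ->
  (nfloor (Rpower (INR k) alpha) <= j)%nat /\ (j <= Nat.div k 2)%nat.
Proof. unfold jrange. intros H. apply in_seq in H. lia. Qed.

Lemma mu_PP k alpha p n : (2 <= k)%nat -> Rabs (mu (PP k alpha p n)) <= 1.
Proof. intros Hk. assert (Hk' : 0 < INR k) by (apply lt_0_INR; lia).
 assert (H : forall l, (forall j, In j l -> (j <= Nat.div k 2)%nat) ->
   Rabs (mu (flat_map (bucket k p n) l)) <= INR (length l) * / INR k).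
 { induction l; intros Hl. simpl. unfold mu; simpl. rewrite Rabs_R0; lra.
   simpl flat_map. rewrite mu_app. simpl length. rewrite S_INR.
   pose proof (mu_bucket k p n a ltac:(lia) (Hl a (or_introl eq_refl))).
   assert (Rabs (mu (flat_map (bucket k p n) l)) <= INR (length l) * / INR k) by (apply IHl; intros; apply Hl; simpl; auto).
   eapply Rle_trans. apply Rabs_triang. rewrite Rabs_left1 by lra. lra. }
 unfold PP. eapply Rle_trans. apply H. intros; apply (in_jrange k alpha); auto.
 apply Rle_trans with (INR k * / INR k). apply Rmult_le_compat_r. apply Rlt_le, Rinv_0_lt_compat; lra.
 apply le_INR. unfold jrange. rewrite length_seq.
 assert (Nat.div k 2 < k)%nat by (apply Nat.div_lt; lia). lia. right; field; lra. Qed.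

Lemma PP_facts k alpha p n : (4 <= k)%nat -> (nfloor (Rpower (INR k) alpha) <= k)%nat ->
  forall pq, In pq (PP k alpha p n) ->
  INR (nfloor (Rpower (INR k) alpha)) / (4 * INR k) <= Rmin (fst pq) (snd pq) /\
  Rmax (fst pq) (snd pq) <= 1 - INR (nfloor (Rpower (INR k) alpha)) / (4 * INR k) /\
  Rabs (snd pq - fst pq) <= / INR k.
Proof. intros Hk Ha pq Hpq. set (a := nfloor (Rpower (INR k) alpha)) in *.
 assert (Hk' : 4 <= INR k) by (replace 4 with (INR 4) by (simpl; lra); apply le_INR; lia).
 unfold PP in Hpq. apply in_flat_map in Hpq. destruct Hpq as [j [Hj Hpq]].
 apply in_jrange in Hj. fold a in Hj. destruct Hj as [Hj1 Hj2].
 unfold bucket in Hpq. apply in_map_iff in Hpq. destruct Hpq as [i [E Hi]]. subst pq. simpl fst; simpl snd.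
 pose proof Hi as Hi'. unfold Istar in Hi'. apply filter_In in Hi'. destruct Hi' as [_ Hi'].
 destruct (inI_facts k j (p i) ltac:(lia) Hj2 Hi') as [X1 [X2 X3]].
 assert (Y : qround k p n j i = INR j / INR k \/ qround k p n j i = INR (S j) / INR k).
 { unfold qround. destruct (Nat.ltb _ _); auto. }
 assert (Aj : INR a <= INR j) by (apply le_INR; auto).
 assert (Ak : INR a <= INR k) by (apply le_INR; auto).
 assert (J2 : INR j * 2 <= INR k). { pose proof (half_le k). assert (INR j <= INR (Nat.div k 2)) by (apply le_INR; auto). lra. }
 assert (Cj : INR a / (4 * INR k) <= INR j / INR k).
 { apply div_le. lra. replace (INR j / INR k * (4 * INR k)) with (4 * INR j) by (field; lra).
   pose proof (pos_INR a). lra. }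
 assert (Cu : INR (S j) / INR k <= 1 - INR a / (4 * INR k)).
 { apply div_le. lra. rewrite S_INR.
   replace ((1 - INR a / (4 * INR k)) * INR k) with (INR k - INR a / 4) by (field; lra). lra. }
 assert (D1 : INR (S j) / INR k - INR j / INR k = / INR k) by (rewrite S_INR; field; lra).
 split; [|split].
 - apply Rmin_glb; destruct Y as [Y|Y]; rewrite ?Y; lra.
 - apply Rmax_lub; destruct Y as [Y|Y]; rewrite ?Y; lra.
 - destruct Y as [Y|Y]; rewrite Y; unfold Rabs; destruct Rcase_abs; lra.
Qed.

Lemma Rpower_pos x y : 0 < Rpower x y.
Proof. unfold Rpower. apply exp_pos. Qed.

Theorem mainTheorem11 (alpha beta : R) :
  0 < alpha < 1 -> 0 < beta < 1 -> alpha + beta > 1 ->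
  exists C : R, exists K : nat, forall k : nat, (K <= k)%nat -> (1 <= k)%nat ->
  forall (n : nat) (p : nat -> R),
    (forall i, (i < n)%nat -> 0 <= p i <= 1) ->
    tv_sum (Xprobs k alpha p n) (Yprobs k alpha p n)
    <= C * (Rpower (INR k) (- ((alpha + beta - 1) / 2)) + Rpower (INR k) (- alpha)
            + Rpower (INR k) (- (1/2)) + Rpower (INR k) (- (1 - beta))).
Proof.
 intros Ha Hb Hab. exists 8. exists (Nat.max 4 (S (nfloor (Rpower 2 (/ alpha))))).
 intros k HK Hk1 n p _.
 assert (Hk4 : (4 <= k)%nat) by lia.
 assert (Hk : 4 <= INR k) by (replace 4 with (INR 4) by (simpl; lra); apply le_INR; lia).
 assert (Hx : Rpower 2 (/ alpha) < INR k).
 { pose proof (nfloor_spec (Rpower 2 (/ alpha)) (Rlt_le _ _ (Rpower_pos _ _))) as [_ H].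
   assert (INR (S (nfloor (Rpower 2 (/ alpha)))) <= INR k) by (apply le_INR; lia).
   rewrite S_INR in H0. lra. }
 assert (Hka : 2 < Rpower (INR k) alpha).
 { replace 2 with (Rpower (Rpower 2 (/ alpha)) alpha).
   apply Rlt_Rpower_l. lra. split; auto. apply Rpower_pos.
   rewrite Rpower_mult. rewrite Rinv_l by lra. apply Rpower_1. lra. }
 assert (Hk1' : Rpower (INR k) alpha <= INR k).
 { rewrite <- (Rpower_1 (INR k)) at 2 by lra. apply Rle_Rpower; lra. }
 set (a := nfloor (Rpower (INR k) alpha)).
 pose proof (nfloor_spec (Rpower (INR k) alpha) ltac:(lra)) as Hafl. fold a in Hafl.
 assert (Hak : (a <= k)%nat) by (apply INR_le; lra).
 assert (Ha1 : 1 <= INR a) by lra.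
 set (c := INR a / (4 * INR k)).
 assert (Hc : 0 < c) by (unfold c; apply Rdiv_lt_0_compat; lra).
 assert (Hc1 : 2 * c <= 1).
 { unfold c. apply Rle_trans with (2 * (INR k / (4 * INR k))).
   apply Rmult_le_compat_l. lra. unfold Rdiv. apply Rmult_le_compat_r. apply Rlt_le, Rinv_0_lt_compat; lra. apply le_INR; auto.
   replace (2 * (INR k / (4 * INR k))) with (1/2) by (field; lra). lra. }
 set (P := PP k alpha p n).
 pose proof (PP_facts k alpha p n Hk4 Hak) as Fct. fold a P in Fct. fold c in Fct.
 assert (HgP : goodP c P) by (intros pq Hpq; destruct (Fct pq Hpq) as [? [? ?]]; split; auto).
 set (N := length P).
 unfold tv_sum. rewrite Xprobs_eq, Yprobs_eq. fold P. rewrite !length_map. rewrite Nat.max_id.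
 rewrite sum_f_R0_sumR. fold (Tn (S (length P)) (map fst P) (map snd P)).
 pose proof (T_le_F c P (Rlt_le _ _ Hc) HgP 0 0 0 (S (length P))) as HT. simpl in HT.
 pose proof (F_cs c P (Rlt_le _ _ Hc) Hc1 HgP 0 0 0) as HF.
 replace (INR 0 - INR 0) with 0 in HF by (simpl; ring).
 assert (HR1 : 0 < Rpower (INR k) (- (alpha / 2))) by apply Rpower_pos.
 assert (Hsum : Rpower (INR k) (- (alpha / 2)) <=
   Rpower (INR k) (- ((alpha + beta - 1) / 2)) + Rpower (INR k) (- alpha)
            + Rpower (INR k) (- (1/2)) + Rpower (INR k) (- (1 - beta))).
 { pose proof (Rpower_pos (INR k) (- alpha)). pose proof (Rpower_pos (INR k) (- (1/2))).
   pose proof (Rpower_pos (INR k) (- (1 - beta))).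
   assert (Rpower (INR k) (- (alpha / 2)) <= Rpower (INR k) (- ((alpha + beta - 1) / 2))) by (apply Rle_Rpower; lra).
   lra. }
 assert (Hsq : forall x, x <= 16 * Rpower (INR k) (- (alpha / 2)) -> / 2 * x <= 8 * Rpower (INR k) (- (alpha/2))) by (intros; lra).
 apply Rle_trans with (8 * Rpower (INR k) (- (alpha / 2))); [| apply Rmult_le_compat_l; lra].
 destruct (Nat.eq_dec (length P) 0) as [HN|HN].
 - clearbody P. apply length_zero_iff_nil in HN. subst P. simpl in HF, HT.
   rewrite Rminus_0_r, Rabs_R0, Rmult_0_r in HT.
   simpl. assert (0 <= Tn 1 [] []) by (unfold Tn; apply sumR_nonneg; intros; apply Rabs_pos). lra.
 - assert (HG1 : G1 c 0 P <= 24 / (2 * c * INR (length P))) by (apply G1_bound; auto; lia).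
   assert (HG2 : G2 0 P <= 2 * INR (length P) / INR k).
   { eapply Rle_trans. apply (G2_bound c P (Rlt_le _ _ Hc) HgP 0).
     assert (Hnu : nu P <= INR (length P) * / INR k) by (apply nu_bound; intros; apply Fct; auto).
     pose proof (mu_le_nu P). pose proof (mu_PP k alpha p n ltac:(lia)). fold P in H0.
     assert ((0 - mu P)^2 <= INR (length P) * / INR k).
     { replace ((0 - mu P)^2) with (Rabs (mu P) * Rabs (mu P)) by (rewrite <- Rabs_mult; rewrite Rabs_right; [ring| nra]).
       pose proof (Rabs_pos (mu P)). nra. }
     unfold Rdiv. lra. }
   assert (HN1 : 1 <= INR (length P)) by (replace 1 with (INR 1) by (simpl; lra); apply le_INR; lia).
   assert (Hprod : G1 c 0 P * G2 0 P <= 96 / INR a).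
   { apply Rle_trans with (24 / (2 * c * INR (length P)) * (2 * INR (length P) / INR k)).
     apply Rmult_le_compat; auto. apply G1_nonneg; lra. eapply G2_nonneg; [|eauto]; lra.
     right. unfold c. field. repeat split; lra. }
   assert (HT2 : Tn (S (length P)) (map fst P) (map snd P) <= sqrt (96 / INR a)).
   { eapply Rle_trans. apply HT. eapply Rle_trans. apply HF. rewrite <- sqrt_mult.
     apply sqrt_le_1_alt. auto. apply G1_nonneg; lra. eapply G2_nonneg; [|eauto]; lra. }
   assert (HT0 : 0 <= Tn (S (length P)) (map fst P) (map snd P)) by (unfold Tn; apply sumR_nonneg; intros; apply Rabs_pos).
   apply Hsq. eapply Rle_trans. apply HT2.
   rewrite <- (sqrt_pow2 (16 * Rpower (INR k) (- (alpha / 2)))) by lra.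
   apply sqrt_le_1_alt.
   replace ((16 * Rpower (INR k) (- (alpha / 2)))^2) with (256 / Rpower (INR k) alpha).
   2:{ unfold Rdiv. rewrite <- Rpower_Ropp. replace (- alpha) with (- (alpha / 2) + - (alpha / 2)) by field.
       rewrite Rpower_plus. change (alpha * / 2) with (alpha / 2). ring. }
   apply Rle_trans with (256 / (2 * INR a)).
   + replace (256 / (2 * INR a)) with (128 / INR a) by (field; lra). unfold Rdiv.
     apply Rmult_le_compat_r. apply Rlt_le, Rinv_0_lt_compat; lra. lra.
   + unfold Rdiv. apply Rmult_le_compat_l. lra. apply Rinv_le_contravar. lra. lra.
Qed.
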